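(* Let $(\mathcal{S},\mathcal{A})$ be a finite directed acyclic graph with unique initial state $s_0$, unique sink state $s_f$, and terminating states $\mathcal{X}\subset\mathcal{S}$. For $i\in\{1,\dots,k\}$ let $p_{i,F}$ be a forward policy on this graph with partition function $Z_i>0$, reaching probability $u_i$, and terminating state distribution $p_i(x)=R_i(x)/Z_i$ where $R_i\ge0$. Let $\omega_1,\dots,\omega_k\ge0$, set $v_i=\omega_iZ_i/\sum_{j=1}^k\omega_jZ_j$, $u_M(s)=\sum_{i=1}^k v_iu_i(s)$, and $$p_{M,F}(s'\mid s)=\sum_{i=1}^k\frac{v_iu_i(s)}{u_M(s)}\,p_{i,F}(s'\mid s)\quad\text{for all } s\in\mathcal{S}\setminus\{s_f\}.$$ Let $p_M(s)$ (resp. $p_i(s)$) denote the probability that a trajectory sampled from $p_{M,F}$ (resp. $p_{i,F}$) terminates at state $s$. Then for all states $s$, $p_M(s)=\sum_{i=1}^k v_ip_i(s)$. Consequently, for $x\in\mathcal{X}$, $p_M(x)=\sum_{i=1}^k v_ip_i(x)\propto\sum_{i=1}^k\omega_iR_i(x)$.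
   Context: A forward policy $p_F$ assigns to each state $s\neq s_f$ a probability distribution $p_F(\cdot\mid s)$ over the children $s'$ of $s$ (states with $(s\to s')\in\mathcal{A}$); terminating states are those with an edge to $s_f$, and a trajectory terminates at $s$ if it takes the edge $s\to s_f$. Its reaching probability $u$ is defined by $u(s_0)=1$ and $u(s)=\sum_{s_*:(s_*\to s)\in\mathcal{A}}u(s_* )p_F(s\mid s_* )$ for $s\neq s_0$. The probability of terminating at $s$ equals $u(s)\,p_F(s_f\mid s)$. *)

(* Defs.v *)
From HB Require Import structures.
From mathcomp Require Import all_boot all_order all_algebra.
Set Implicit Arguments. Unset Strict Implicit. Unset Printing Implicit Defensive.
Import Order.TTheory GRing.Theory Num.Theory.
Local Open Scope ring_scope.

(* A finite directed graph is given by a finType S of states and an edge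
   relation A : rel S (A s s' means (s -> s') is an edge). *)

Definition flow_dag (S : finType) (A : rel S) (s0 sf : S) : Prop :=
  (forall s s', A s s' -> ~~ connect A s' s) /\
  (forall s, ~~ A s s0) /\ (forall s, connect A s0 s) /\
  (forall s, ~~ A sf s) /\ (forall s, s != sf -> exists s', A s s').

Definition terminating (S : finType) (A : rel S) (sf : S) (s : S) : bool :=
  A s sf.

Definition forward_policy (R : numDomainType) (S : finType) (A : rel S)
    (sf : S) (p : S -> S -> R) : Prop :=
  forall s, s != sf ->
    (forall s', 0 <= p s s') /\ (forall s', ~~ A s s' -> p s s' = 0) /\
    \sum_(s' : S) p s s' = 1.

Definition reaching_prob (R : numDomainType) (S : finType) (A : rel S)
    (s0 : S) (p : S -> S -> R) (u : S -> R) : Prop :=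
  u s0 = 1 /\
  forall s, s != s0 -> u s = \sum_(s' : S | A s' s) u s' * p s' s.

Definition term_prob (R : numDomainType) (S : finType)
    (p : S -> S -> R) (u : S -> R) (sf s : S) : R :=
  u s * p s sf.

(* Main.v *)
Require Import Defs.
From HB Require Import structures.
From mathcomp Require Import all_boot all_order all_algebra ring.
Import Order.TTheory GRing.Theory Num.Theory.
Local Open Scope ring_scope.

Lemma dag_ind (S : finType) (A : rel S) :
  (forall s s', A s s' -> ~~ connect A s' s) ->
  forall P : S -> Prop, (forall s, (forall s', A s' s -> P s') -> P s) ->
  forall s, P s.
Proof.
move=> acyc P IH s.
have lt s1 s2 : A s1 s2 -> (#|[set t | connect A t s1]| < #|[set t | connect A t s2]|)%N.
  move=> H; apply: proper_card; apply/properP; split.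
    apply/subsetP=> t; rewrite !inE => Ht; apply: connect_trans Ht (connect1 H).
  by exists s2; rewrite !inE ?connect0 // (negbTE (acyc _ _ H)).
move: {2}#|[set t | connect A t s]| (leqnn #|[set t | connect A t s]|) => n.
elim: n s => [|n IHn] s Hn; apply: IH => s' H; have := lt _ _ H.
  by rewrite leqn0 in Hn; rewrite (eqP Hn).
move=> Hl; apply: IHn; by rewrite -ltnS (leq_trans Hl).
Qed.

Theorem theoremA4 (R : realFieldType) (S : finType) (A : rel S) (s0 sf : S)
    (k : nat) (pF : 'I_k -> S -> S -> R) (u : 'I_k -> S -> R)
    (Z : 'I_k -> R) (Rw : 'I_k -> S -> R) (w : 'I_k -> R) (uMr : S -> R) :
  flow_dag A s0 sf ->
  (forall i, forward_policy A sf (pF i)) ->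
  (forall i, reaching_prob A s0 (pF i) (u i)) ->
  (forall i, 0 < Z i) ->
  (forall i x, terminating A sf x -> 0 <= Rw i x) ->
  (forall i x, terminating A sf x -> term_prob (pF i) (u i) sf x = Rw i x / Z i) ->
  (forall i, 0 <= w i) ->
  let v := fun i => w i * Z i / \sum_(j < k) w j * Z j in
  let uM := fun s => \sum_(i < k) v i * u i s in
  let pMF := fun s s' => \sum_(i < k) v i * u i s / uM s * pF i s s' in
  reaching_prob A s0 pMF uMr ->
  (forall s, term_prob pMF uMr sf s =
             \sum_(i < k) v i * term_prob (pF i) (u i) sf s) /\
  (forall x, terminating A sf x ->
     term_prob pMF uMr sf x = \sum_(i < k) v i * term_prob (pF i) (u i) sf x /\
     term_prob pMF uMr sf x =
       (\sum_(i < k) w i * Rw i x) / \sum_(j < k) w j * Z j).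
Proof.
move=> [acyc [noin [reach [noout haschild]]]] hpol hreach hZ hR hterm hw v uM pMF [hM0 hM].
set D := \sum_(j < k) w j * Z j.
have D0 : 0 <= D by apply: sumr_ge0 => j _; apply: mulr_ge0 => //; apply: ltW.
have v0 i : 0 <= v i by apply: divr_ge0 => //; apply: mulr_ge0 => //; apply: ltW.
have u0 i : forall s, 0 <= u i s.
  have [hu0 hu] := hreach i.
  apply: (@dag_ind S A acyc (fun s => 0 <= u i s)) => s IH.
  have [->|ns] := eqVneq s s0; first by rewrite hu0.
  rewrite hu //; apply: sumr_ge0 => s' H; apply: mulr_ge0; first exact: IH.
  have ns' : s' != sf by apply/eqP=> E; move: (noout s); rewrite -E H.
  by have [] := hpol i s' ns'.
have key s s' : uM s * pMF s s' = \sum_(i < k) v i * u i s * pF i s s'.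
  have [E|nz] := eqVneq (uM s) 0.
    have Hz i : v i * u i s = 0.
      apply/eqP; move: (E) => /eqP; rewrite /uM psumr_eq0; last by move=> l _; apply: mulr_ge0.
      by move=> /allP H; apply: H (mem_index_enum _).
    rewrite E mul0r; symmetry; apply: big1 => i _; by rewrite Hz mul0r.
  rewrite /pMF mulr_sumr; apply: eq_bigr => i _; by field.
have part1 : forall s, term_prob pMF uMr sf s = \sum_(i < k) v i * term_prob (pF i) (u i) sf s.
  have [DE|Dnz] := eqVneq D 0.
    have vz i : v i = 0 by rewrite /v -/D DE invr0 mulr0.
    move=> s; rewrite /term_prob /pMF !big1 ?mulr0 // => i _; by rewrite vz !mul0r.
  have uMe : forall s, uMr s = uM s.
    apply: (@dag_ind S A acyc (fun s => uMr s = uM s)) => s IH.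
    have [->|ns] := eqVneq s s0.
      rewrite hM0 /uM; under eq_bigr => i _ do rewrite (proj1 (hreach i)) mulr1.
      by rewrite /v -mulr_suml -/D divff.
    rewrite hM //.
    under eq_bigr => s' H do rewrite IH // key.
    rewrite exchange_big /uM; apply: eq_bigr => i _.
    rewrite (proj2 (hreach i) s ns) mulr_sumr; apply: eq_bigr => s' _; by rewrite mulrA.
  move=> s; rewrite /term_prob uMe key; apply: eq_bigr => i _; by rewrite mulrA.
split => // x tx; split => //; rewrite part1.
rewrite mulr_suml; apply: eq_bigr => i _; rewrite hterm // /v -/D.
have := hZ i; rewrite lt0r => /andP [Zn _].
have [DE|Dnz] := eqVneq D 0; first by rewrite DE !invr0 !mulr0 mul0r.
by field; apply/andP.
Qed.
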